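(* Let $a:\mathbb{R}_{\ge 0}\to\mathbb{R}_{>0}$ be a continuous positive function converging to a constant $a^*>0$ at rate at least $\rho_a>0$. Consider the system \[ \dot y=y\bigl(1-a(t)y\bigr),\qquad \dot x=1-yz,\qquad \dot z=z(1-yz), \] with initial values $y(0)>0$, $z(0)>0$ and $x(0)=\ln z(0)$ (and assume the solution exists for all $t\ge0$). Then $y(t)\to 1/a^*$, $z(t)\to a^*$, $x(t)=\ln z(t)$ for all $t\ge 0$, and $x(t)\to\ln a^*$ at rate at least $\min\{\rho_a,1\}$. *)

(* Defs.v *)
From Stdlib Require Import Reals Lra.
From Coquelicot Require Import Coquelicot.
Open Scope R_scope.

(* "f converges to L at rate at least rho":
   limsup_{t->oo} (1/t) ln |f t - L| <= -rho, i.e. for every r < rho there is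
   a constant C with |f t - L| <= C e^{-r t} for all t >= 0. *)
Definition conv_rate_atleast (f : R -> R) (L rho : R) : Prop :=
  forall r, r < rho -> exists C, forall t, 0 <= t -> Rabs (f t - L) <= C * exp (- r * t).

Definition continuous_on_nonneg (f : R -> R) : Prop :=
  (forall t, 0 < t -> continuous f t) /\ filterlim f (at_right 0) (locally (f 0)).

(* Main.v *)
Require Import Defs.
From Stdlib Require Import Reals Lra.
From Coquelicot Require Import Coquelicot.
Open Scope R_scope.

Definition CC (f : R -> R) := forall t, continuous (fun s => f (Rmax s 0)) t.

Lemma C_of (f : R -> R) : continuous_on_nonneg f -> CC f.
Proof.
  intros [H1 H0] t.
  destruct (Rtotal_order t 0) as [Hlt|[Heq|Hgt]].
  - apply continuous_ext_loc with (fun _ => f 0).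
    + apply locally_interval with m_infty 0; simpl; auto.
      intros s _ Hs; rewrite Rmax_right; lra.
    + apply continuous_const.
  - subst t. intros P HP. unfold filtermap.
    rewrite Rmax_left in HP by lra.
    specialize (H0 P HP). unfold filtermap, at_right, within in H0.
    apply filter_imp with (2 := H0). intros s Hs.
    destruct (Rle_dec s 0).
    + rewrite Rmax_right by lra. now apply locally_singleton.
    + rewrite Rmax_left by lra. apply Hs; lra.
  - apply continuous_ext_loc with f.
    + apply locally_interval with 0 p_infty; simpl; auto.
      intros s Hs _; rewrite Rmax_left; lra.
    + now apply H1.
Qed.

Lemma cont_near0 (h : R -> R) (eps : R) : CC h -> 0 < eps ->
  exists d, 0 < d /\ forall s, 0 <= s < d -> Rabs (h s - h 0) < eps.
Proof.
  intros Hc He. specialize (Hc 0).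
  apply filterlim_locally with (eps := mkposreal eps He) in Hc.
  destruct Hc as [d Hd]. exists d. split. apply cond_pos.
  intros s Hs. specialize (Hd s).
  rewrite (Rmax_left s 0) in Hd by lra. rewrite Rmax_left in Hd by lra.
  apply Hd. unfold ball; simpl; unfold AbsRing_ball, abs, minus, plus, opp; simpl.
  rewrite Rabs_right; lra.
Qed.

Lemma mon (h h' : R -> R) T : 0 <= T -> CC h ->
  (forall t, 0 < t <= T -> is_derive h t (h' t)) ->
  (forall t, 0 < t <= T -> 0 <= h' t) -> h 0 <= h T.
Proof.
  intros HT Hc Hd Hs.
  destruct (Req_dec T 0) as [->|HT0]; [lra|].
  assert (key : forall e, 0 < e < T -> h e <= h T).
  { intros e He.
    destruct (MVT_gen (fun s => h (Rmax s 0)) e T h') as [c [Hc1 Hc2]].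
    - rewrite Rmin_left by lra. rewrite Rmax_right by lra. intros s Hs'.
      apply is_derive_ext_loc with h.
      + apply locally_interval with 0 p_infty; simpl; auto; try lra.
        intros w Hw _; rewrite Rmax_left; lra.
      + apply Hd; lra.
    - intros s _. apply continuity_pt_filterlim. apply Hc.
    - rewrite Rmin_left in Hc1 by lra. rewrite Rmax_right in Hc1 by lra.
      rewrite !Rmax_left in Hc2 by lra.
      assert (0 <= h' c) by (apply Hs; lra).
      assert (0 <= h' c * (T - e)) by (apply Rmult_le_pos; lra). lra. }
  destruct (Rle_dec (h 0) (h T)) as [|Hn]; [auto|exfalso].
  destruct (cont_near0 h (h 0 - h T) Hc) as [d [Hd0 Hd1]]; [lra|].
  set (e := Rmin (d/2) (T/2)).
  assert (0 < e) by (unfold e; apply Rmin_pos; lra).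
  assert (e <= d/2) by apply Rmin_l. assert (e <= T/2) by apply Rmin_r.
  specialize (Hd1 e ltac:(lra)). specialize (key e ltac:(lra)).
  apply Rabs_def2 in Hd1. lra.
Qed.

Lemma C_of_cont (f : R -> R) : (forall t, continuous f t) -> CC f.
Proof.
  intros H. apply C_of. split; [intros; apply H|].
  eapply filterlim_filter_le_1; [|apply H]. apply filter_le_within.
Qed.

Lemma C_mult f g : CC f -> CC g -> CC (fun s => f s * g s).
Proof. intros Hf Hg t. apply (continuous_mult (fun s => f (Rmax s 0)) (fun s => g (Rmax s 0))); auto. Qed.
Lemma C_plus f g : CC f -> CC g -> CC (fun s => f s + g s).
Proof. intros Hf Hg t. apply (continuous_plus (fun s => f (Rmax s 0)) (fun s => g (Rmax s 0))); auto. Qed.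
Lemma C_opp f : CC f -> CC (fun s => - f s).
Proof. intros Hf t. apply (continuous_opp (fun s => f (Rmax s 0))); auto. Qed.
Lemma C_minus f g : CC f -> CC g -> CC (fun s => f s - g s).
Proof. intros. apply (C_plus f (fun s => - g s)); auto. now apply C_opp. Qed.
Lemma C_const c : CC (fun _ => c).
Proof. intros t. apply continuous_const. Qed.
Lemma C_inv f : CC f -> (forall t, 0 <= t -> f t <> 0) -> CC (fun s => / f s).
Proof. intros Hf H t. apply (continuous_Rinv_comp (fun s => f (Rmax s 0))); auto.
  apply H. apply Rmax_r. Qed.
Lemma C_exp f : CC f -> CC (fun s => exp (f s)).
Proof. intros Hf t. apply (continuous_exp_comp (fun s => f (Rmax s 0))); auto. Qed.
Lemma C_id : CC (fun s => s).
Proof. apply C_of_cont. intros; apply continuous_id. Qed.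
Lemma C_lin k : CC (fun s => k * s).
Proof. apply C_mult. apply C_const. apply C_id. Qed.

Lemma dmul f g t df dg : is_derive f t df -> is_derive g t dg ->
  is_derive (fun s => f s * g s) t (df * g t + f t * dg).
Proof. intros. apply (is_derive_mult f g t df dg); auto. intros; apply Rmult_comm. Qed.
Lemma dexpl k t : is_derive (fun s => exp (k * s)) t (k * exp (k * t)).
Proof. auto_derive; auto. ring. Qed.

Lemma posit (f g : R -> R) : CC f -> CC g ->
  (forall t, 0 < t -> is_derive f t (f t * g t)) -> 0 < f 0 ->
  forall t, 0 <= t -> 0 < f t.
Proof.
  intros Hf Hg Hd H0 t Ht.
  destruct (continuity_ab_maj (fun s => Rabs (g (Rmax s 0))) 0 t Ht) as [Mx [HM _]].
  { intros c _. apply continuity_pt_filterlim.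
    apply (continuous_comp (fun s => g (Rmax s 0)) Rabs). apply Hg. apply continuous_Rabs. }
  set (M := Rabs (g (Rmax Mx 0))) in HM.
  assert (HB : forall s, 0 <= s <= t -> - M <= g s <= M).
  { intros s Hs. specialize (HM s Hs). simpl in HM. rewrite Rmax_left in HM by lra.
    pose proof (Rle_abs (g s)); pose proof (Rle_abs (- g s)); rewrite Rabs_Ropp in *; lra. }
  assert (Hnz : forall s, 0 <= s <= t -> f s <> 0).
  { intros s Hs Hfs.
    assert (f 0 * f 0 * exp (2 * M * 0) <= f s * f s * exp (2 * M * s)).
    { apply (mon (fun w => f w * f w * exp (2*M * w))
      (fun w => 2 * (f w * f w * exp (2*M*w)) * (g w + M)) s ltac:(lra)).
      - apply C_mult. apply C_mult; auto. apply C_exp, C_lin.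
      - intros w Hw. cbv beta.
        replace (2 * (f w * f w * exp (2 * M * w)) * (g w + M)) with
          ((f w * g w * f w + f w * (f w * g w)) * exp (2*M*w) + f w * f w * (2*M*exp (2*M*w))) by ring.
        apply (dmul (fun s => f s * f s) (fun s => exp (2*M*s))). apply (dmul f f); apply Hd; lra. apply dexpl.
      - intros w Hw. specialize (HB w ltac:(lra)).
        apply Rmult_le_pos; [|lra]. pose proof (exp_pos (2*M*w)).
        pose proof (Rle_0_sqr (f w)). unfold Rsqr in *. apply Rmult_le_pos; [lra|]. apply Rmult_le_pos; lra. }
    rewrite Hfs, !Rmult_0_l in H. assert (0 < f 0 * f 0 * exp (2*M*0)) by (apply Rmult_lt_0_compat; [nra|apply exp_pos]). lra. }
  destruct (Rlt_le_dec 0 (f t)) as [|Hle]; auto. exfalso.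
  destruct (IVT_gen (fun s => f (Rmax s 0)) 0 t 0) as [c [Hc1 Hc2]].
  - intros c. apply continuity_pt_filterlim. apply Hf.
  - rewrite (Rmax_left 0 0), (Rmax_left t 0) by lra. rewrite Rmin_right, Rmax_left; lra.
  - rewrite Rmin_left in Hc1 by lra. rewrite Rmax_right in Hc1 by lra.
    simpl in Hc2. rewrite Rmax_left in Hc2 by lra. apply (Hnz c); lra.
Qed.

Lemma dplus f g t df dg : is_derive f t df -> is_derive g t dg ->
  is_derive (fun s => f s + g s) t (df + dg).
Proof. intros. apply (is_derive_plus f g t df dg); auto. Qed.
Lemma dopp f t df : is_derive f t df -> is_derive (fun s => - f s) t (- df).
Proof. intros. apply (is_derive_opp f t df); auto. Qed.
Lemma dminus f g t df dg : is_derive f t df -> is_derive g t dg ->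
  is_derive (fun s => f s - g s) t (df - dg).
Proof. intros. apply (dplus f (fun s => - g s)); auto. now apply dopp. Qed.
Lemma dconst c t : is_derive (fun _ => c) t 0.
Proof. apply (is_derive_const c t). Qed.
Lemma dexp t : is_derive exp t (exp t).
Proof. apply is_derive_exp. Qed.

Lemma exp_mono x y : x <= y -> exp x <= exp y.
Proof. intros [H|H]. left; now apply exp_increasing. subst; lra. Qed.

Lemma lin f g L K r : CC f -> (forall t, 0 < t -> is_derive f t (- f t + g t)) -> 0 < r < 1 ->
  (forall t, 0 <= t -> Rabs (g t - L) <= K * exp (- r * t)) ->
  forall t, 0 <= t -> Rabs (f t - L) <= (Rabs (f 0 - L) + K / (1 - r)) * exp (- r * t).
Proof.
  intros Hc Hd Hr Hg t Ht.
  assert (HK : 0 <= K).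
  { specialize (Hg 0 (Rle_refl _)). rewrite Rmult_0_r, exp_0 in Hg.
    pose proof (Rabs_pos (g 0 - L)). lra. }
  assert (HdP : forall s, 0 < s -> is_derive (fun w => exp w * (f w - L)) s (exp s * (g s - L))).
  { intros s Hs. replace (exp s * (g s - L)) with (exp s * (f s - L) + exp s * (- f s + g s - 0)) by ring.
    apply (dmul exp (fun w => f w - L)). apply dexp. apply dminus. auto. apply dconst. }
  assert (HdQ : forall s, is_derive (fun w => K / (1 - r) * exp ((1 - r) * w)) s (K * exp ((1 - r) * s))).
  { intros s. replace (K * exp ((1 - r) * s)) with (K / (1 - r) * ((1-r) * exp ((1 - r) * s))) by (field; lra).
    apply is_derive_scal. apply dexpl. }
  assert (HE : forall s, 0 <= s -> Rabs (exp s * (g s - L)) <= K * exp ((1 - r) * s)).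
  { intros s Hs. rewrite Rabs_mult, Rabs_right by (left; apply exp_pos).
    replace ((1 - r) * s) with (s + - r * s) by ring. rewrite exp_plus.
    rewrite <- Rmult_assoc, (Rmult_comm K), Rmult_assoc. apply Rmult_le_compat_l. left; apply exp_pos. auto. }
  assert (HCP : CC (fun w => exp w * (f w - L))).
  { apply C_mult. apply C_exp, C_id. apply C_minus; auto. apply C_const. }
  assert (HCQ : CC (fun w => K / (1 - r) * exp ((1 - r) * w))).
  { apply C_mult. apply C_const. apply C_exp, C_lin. }
  assert (H1 : K / (1 - r) * exp ((1 - r) * 0) - exp 0 * (f 0 - L) <=
               K / (1 - r) * exp ((1 - r) * t) - exp t * (f t - L)).
  { apply (mon (fun w => K / (1 - r) * exp ((1 - r) * w) - exp w * (f w - L))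
            (fun s => K * exp ((1 - r) * s) - exp s * (g s - L)) t Ht).
    - apply C_minus; auto.
    - intros s Hs. apply dminus; auto. apply HdP; lra.
    - intros s Hs. specialize (HE s ltac:(lra)).
      pose proof (Rle_abs (exp s * (g s - L))). lra. }
  assert (H2 : K / (1 - r) * exp ((1 - r) * 0) + exp 0 * (f 0 - L) <=
               K / (1 - r) * exp ((1 - r) * t) + exp t * (f t - L)).
  { apply (mon (fun w => K / (1 - r) * exp ((1 - r) * w) + exp w * (f w - L))
            (fun s => K * exp ((1 - r) * s) + exp s * (g s - L)) t Ht).
    - apply C_plus; auto.
    - intros s Hs. apply dplus; auto. apply HdP; lra.
    - intros s Hs. specialize (HE s ltac:(lra)).
      pose proof (Rle_abs (- (exp s * (g s - L)))). rewrite Rabs_Ropp in H. lra. }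
  rewrite Rmult_0_r, exp_0, Rmult_1_r, Rmult_1_l in H1, H2.
  replace ((1 - r) * t) with (t + - r * t) in H1, H2 by ring. rewrite exp_plus in H1, H2.
  set (E := exp t) in *. set (F := exp (- r * t)) in *.
  assert (HE0 : 0 < E) by apply exp_pos. assert (HF0 : 0 < F) by apply exp_pos.
  assert (HEF : 1 <= E * F).
  { unfold E, F. rewrite <- exp_plus. rewrite <- exp_0. apply exp_mono. nra. }
  assert (HB : 0 <= K / (1 - r)) by (apply Rdiv_le_0_compat; lra).
  set (B := K / (1 - r)) in *.
  apply (Rmult_le_reg_l E); auto.
  assert (HA : E * Rabs (f t - L) <= B * (E * F) + Rabs (f 0 - L)).
  { pose proof (Rle_abs (f 0 - L)). pose proof (Rle_abs (- (f 0 - L))). rewrite Rabs_Ropp in H0.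
    destruct (Rle_dec 0 (f t - L)).
    - rewrite Rabs_right by lra. lra.
    - rewrite Rabs_left by lra. lra. }
  pose proof (Rabs_pos (f 0 - L)).
  assert (Rabs (f 0 - L) <= Rabs (f 0 - L) * (E * F)).
  { rewrite <- (Rmult_1_r (Rabs (f 0 - L))) at 1. apply Rmult_le_compat_l; lra. }
  nra.
Qed.

Lemma low f g : CC f -> (forall t, 0 < t -> is_derive f t (- f t + g t)) ->
  (forall t, 0 < t -> 0 < g t) -> forall t, 0 <= t -> f 0 * exp (- t) <= f t.
Proof.
  intros Hc Hd Hg t Ht.
  assert (H : exp 0 * f 0 <= exp t * f t).
  { apply (mon (fun w => exp w * f w) (fun w => exp w * g w) t Ht).
    - apply C_mult; auto. apply C_exp, C_id.
    - intros s Hs. replace (exp s * g s) with (exp s * f s + exp s * (- f s + g s)) by ring.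
      apply (dmul exp f). apply dexp. apply Hd; lra.
    - intros s Hs. left. apply Rmult_lt_0_compat. apply exp_pos. apply Hg; lra. }
  rewrite exp_0, Rmult_1_l in H.
  apply (Rmult_le_reg_l (exp t)). apply exp_pos.
  replace (exp t * (f 0 * exp (- t))) with (f 0 * (exp t * exp (-t))) by ring.
  rewrite <- exp_plus. replace (t + - t) with 0 by ring. rewrite exp_0. lra.
Qed.

Lemma uni f L K r : 0 < f 0 -> 0 < L -> 0 < r ->
  (forall t, 0 <= t -> f 0 * exp (- t) <= f t) ->
  (forall t, 0 <= t -> Rabs (f t - L) <= K * exp (- r * t)) ->
  exists m, 0 < m /\ forall t, 0 <= t -> m <= f t.
Proof.
  intros Hf0 HL Hr Hlow Hrate.
  set (K1 := Rmax K 1).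
  assert (HK1 : 1 <= K1) by apply Rmax_r. assert (HKK : K <= K1) by apply Rmax_l.
  set (q := L / (2 * K1)).
  assert (Hq : 0 < q) by (unfold q; apply Rdiv_lt_0_compat; lra).
  exists (Rmin (L/2) (f 0 * exp (ln q / r))). split.
  { apply Rmin_pos. lra. apply Rmult_lt_0_compat; auto. apply exp_pos. }
  intros t Ht.
  destruct (Rle_dec (K1 * exp (- r * t)) (L/2)) as [Hc|Hc].
  - assert (Rabs (f t - L) <= L/2).
    { eapply Rle_trans. apply Hrate; auto. eapply Rle_trans; [|apply Hc].
      apply Rmult_le_compat_r; auto. left; apply exp_pos. }
    pose proof (Rle_abs (- (f t - L))). rewrite Rabs_Ropp in H0.
    pose proof (Rmin_l (L/2) (f 0 * exp (ln q / r))). lra.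
  - assert (q < exp (- r * t)).
    { unfold q. apply Rnot_le_lt in Hc.
      apply (Rmult_lt_reg_l (2 * K1)). lra. field_simplify; lra. }
    apply ln_increasing in H; auto. rewrite ln_exp in H.
    assert (ln q / r < - t).
    { apply (Rmult_lt_reg_r r); auto. field_simplify; lra. }
    apply exp_increasing in H0.
    pose proof (Rmin_r (L/2) (f 0 * exp (ln q / r))).
    pose proof (Hlow t Ht).
    assert (f 0 * exp (ln q / r) <= f 0 * exp (- t)) by (apply Rmult_le_compat_l; lra).
    lra.
Qed.

Lemma lim_of f L K r : 0 < r -> (forall t, 0 <= t -> Rabs (f t - L) <= K * exp (- r * t)) ->
  is_lim f p_infty L.
Proof.
  intros Hr H. apply is_lim_spec. intros eps. simpl.
  set (K1 := Rmax K 1).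
  assert (HK1 : 1 <= K1) by apply Rmax_r. assert (HKK : K <= K1) by apply Rmax_l.
  pose proof (cond_pos eps) as He.
  exists (Rmax 0 (ln (K1 / eps) / r)). intros t Ht.
  assert (Ht0 : 0 <= t) by (pose proof (Rmax_l 0 (ln (K1 / eps) / r)); lra).
  assert (Ht1 : ln (K1 / eps) / r < t) by (pose proof (Rmax_r 0 (ln (K1 / eps) / r)); lra).
  assert (ln (K1 / eps) < r * t).
  { apply (Rmult_lt_compat_r r) in Ht1; auto. field_simplify in Ht1; lra. }
  apply exp_increasing in H0. rewrite exp_ln in H0 by (apply Rdiv_lt_0_compat; lra).
  eapply Rle_lt_trans. apply H; auto.
  replace (- r * t) with (- (r * t)) by ring. rewrite exp_Ropp.
  pose proof (exp_pos (r * t)).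
  apply Rle_lt_trans with (K1 * / exp (r * t)).
  { apply Rmult_le_compat_r; auto. left; apply Rinv_0_lt_compat; auto. }
  apply (Rmult_lt_reg_r (exp (r * t))); auto.
  rewrite Rmult_assoc, Rinv_l, Rmult_1_r by lra.
  apply (Rmult_lt_compat_l eps) in H0; auto. field_simplify in H0; lra.
Qed.

Lemma ln_half p q m : 0 < m -> m <= p -> m <= q -> ln p - ln q <= Rabs (p - q) / m.
Proof.
  intros Hm Hp Hq.
  rewrite <- ln_div by lra.
  pose proof (exp_ineq1_le (ln (p / q))). rewrite exp_ln in H by (apply Rdiv_lt_0_compat; lra).
  assert (p / q - 1 = (p - q) / q) by (field; lra).
  assert ((p - q) / q <= Rabs (p - q) / m).
  { unfold Rdiv. apply Rle_trans with (Rabs (p - q) * / q).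
    apply Rmult_le_compat_r. left; apply Rinv_0_lt_compat; lra. apply Rle_abs.
    apply Rmult_le_compat_l. apply Rabs_pos. apply Rinv_le_contravar; lra. }
  lra.
Qed.

Lemma ln_lip p q m : 0 < m -> m <= p -> m <= q -> Rabs (ln p - ln q) <= Rabs (p - q) / m.
Proof.
  intros. apply Rabs_le. split.
  - pose proof (ln_half q p m H H1 H0). rewrite Rabs_minus_sym in H2. lra.
  - now apply ln_half.
Qed.

Lemma inv_lip U A m : 0 < m -> m <= U -> 0 < A -> Rabs (/ U - / A) <= Rabs (U - A) / (m * A).
Proof.
  intros Hm HU HA.
  replace (/ U - / A) with ((A - U) * / (U * A)) by (field; lra).
  rewrite Rabs_mult, Rabs_minus_sym, (Rabs_right (/ (U * A))).
  2: left; apply Rinv_0_lt_compat; nra.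
  unfold Rdiv. apply Rmult_le_compat_l. apply Rabs_pos.
  apply Rinv_le_contravar. nra. nra.
Qed.

Lemma dexpc f t df : is_derive f t df -> is_derive (fun s => exp (f s)) t (df * exp (f t)).
Proof. intros H. apply (is_derive_comp exp f t (exp (f t)) df). apply dexp. auto. Qed.

Lemma Kpos f L K r : (forall t, 0 <= t -> Rabs (f t - L) <= K * exp (- r * t)) -> 0 <= K.
Proof. intros H. specialize (H 0 (Rle_refl _)). rewrite Rmult_0_r, exp_0 in H.
  pose proof (Rabs_pos (f 0 - L)). lra. Qed.

Theorem lemma4p3 (a : R -> R) (astar rho_a : R) (y x z : R -> R) :
  continuous_on_nonneg a ->
  (forall t, 0 <= t -> 0 < a t) ->
  0 < astar -> 0 < rho_a ->
  conv_rate_atleast a astar rho_a ->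
  continuous_on_nonneg y -> continuous_on_nonneg x -> continuous_on_nonneg z ->
  (forall t, 0 < t -> is_derive y t (y t * (1 - a t * y t))) ->
  (forall t, 0 < t -> is_derive x t (1 - y t * z t)) ->
  (forall t, 0 < t -> is_derive z t (z t * (1 - y t * z t))) ->
  0 < y 0 -> 0 < z 0 -> x 0 = ln (z 0) ->
  is_lim y p_infty (/ astar) /\
  is_lim z p_infty astar /\
  (forall t, 0 <= t -> x t = ln (z t)) /\
  conv_rate_atleast x (ln astar) (Rmin rho_a 1).
Proof.
  intros Ha Hapos Has Hrho Harate Hy Hx Hz Hdy Hdx Hdz Hy0 Hz0 Hx0.
  apply C_of in Ha, Hy, Hx, Hz.
  assert (ypos : forall t, 0 <= t -> 0 < y t).
  { apply (posit y (fun s => 1 - a s * y s)); auto.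
    apply C_minus. apply C_const. apply C_mult; auto. }
  assert (zpos : forall t, 0 <= t -> 0 < z t).
  { apply (posit z (fun s => 1 - y s * z s)); auto.
    apply C_minus. apply C_const. apply C_mult; auto. }
  assert (xeq : forall t, 0 <= t -> x t = ln (z t)).
  { intros t Ht.
    assert (Hc : CC (fun s => z s * exp (- x s))).
    { apply C_mult; auto. apply C_exp, C_opp; auto. }
    assert (Hd : forall s, 0 < s <= t -> is_derive (fun s => z s * exp (- x s)) s 0).
    { intros s Hs.
      replace 0 with (z s * (1 - y s * z s) * exp (- x s) + z s * ((- (1 - y s * z s)) * exp (- x s))) by ring.
      apply (dmul z (fun s => exp (- x s))). apply Hdz; lra.
      apply (dexpc (fun s => - x s)). apply dopp. apply Hdx; lra. }
    assert (H1 : z 0 * exp (- x 0) <= z t * exp (- x t)).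
    { apply (mon _ (fun _ => 0) t Ht Hc Hd). intros; lra. }
    assert (H2 : - (z 0 * exp (- x 0)) <= - (z t * exp (- x t))).
    { apply (mon (fun s => - (z s * exp (- x s))) (fun _ => - 0) t Ht).
      apply C_opp; auto. intros s Hs; apply dopp; auto. intros; lra. }
    assert (H3 : z t * exp (- x t) = 1).
    { rewrite Hx0, exp_Ropp, exp_ln in H1, H2 by auto.
      replace (z 0 * / z 0) with 1 in H1, H2 by (field; lra). lra. }
    rewrite exp_Ropp in H3.
    assert (z t = exp (x t)).
    { pose proof (exp_pos (x t)). apply (Rmult_eq_reg_r (/ exp (x t))).
      rewrite H3. field. lra. apply Rinv_neq_0_compat; lra. }
    rewrite H, ln_exp. auto. }
  assert (core : forall r1, 0 < r1 < Rmin rho_a 1 -> exists Ky Kz Kx,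
    (forall t, 0 <= t -> Rabs (y t - / astar) <= Ky * exp (- r1 * t)) /\
    (forall t, 0 <= t -> Rabs (z t - astar) <= Kz * exp (- r1 * t)) /\
    (forall t, 0 <= t -> Rabs (x t - ln astar) <= Kx * exp (- r1 * t))).
  { intros r1 Hr1.
    assert (Hr1a : r1 < rho_a) by (pose proof (Rmin_l rho_a 1); lra).
    assert (Hr1b : r1 < 1) by (pose proof (Rmin_r rho_a 1); lra).
    destruct (Harate r1 Hr1a) as [Ka HKa].
    set (u := fun s => / y s).
    assert (Cu : CC u) by (apply C_inv; auto; intros t Ht; specialize (ypos t Ht); lra).
    assert (du : forall t, 0 < t -> is_derive u t (- u t + a t)).
    { intros t Ht. specialize (ypos t ltac:(lra)).
      replace (- u t + a t) with (- (y t * (1 - a t * y t)) / y t ^ 2) by (unfold u; field; lra).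
      apply is_derive_inv; auto. lra. }
    pose proof (lin u a astar Ka r1 Cu du ltac:(lra) HKa) as Hu.
    set (Ku := Rabs (u 0 - astar) + Ka / (1 - r1)) in Hu.
    assert (Hu0 : 0 < u 0) by (unfold u; apply Rinv_0_lt_compat; auto).
    pose proof (low u a Cu du ltac:(intros; apply Hapos; lra)) as Hul.
    destruct (uni u astar Ku r1 Hu0 Has ltac:(lra) Hul Hu) as [mu [Hmu Hmu2]].
    set (Ky := Ku / (mu * astar)).
    assert (Hyr : forall t, 0 <= t -> Rabs (y t - / astar) <= Ky * exp (- r1 * t)).
    { intros t Ht. replace (y t) with (/ u t) by (unfold u; apply Rinv_inv).
      eapply Rle_trans. apply (inv_lip (u t) astar mu); auto.
      unfold Ky. replace (Ku / (mu*astar) * exp(-r1*t)) with (Ku * exp(-r1*t) / (mu*astar)) by (field; nra).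
      apply Rmult_le_compat_r; [left; apply Rinv_0_lt_compat; nra| auto]. }
    set (p := fun s => / z s).
    assert (Cp : CC p) by (apply C_inv; auto; intros t Ht; specialize (zpos t Ht); lra).
    assert (dp : forall t, 0 < t -> is_derive p t (- p t + y t)).
    { intros t Ht. specialize (zpos t ltac:(lra)).
      replace (- p t + y t) with (- (z t * (1 - y t * z t)) / z t ^ 2) by (unfold p; field; lra).
      apply is_derive_inv; auto. lra. }
    pose proof (lin p y (/ astar) Ky r1 Cp dp ltac:(lra) Hyr) as Hp.
    set (Kp := Rabs (p 0 - / astar) + Ky / (1 - r1)) in Hp.
    assert (Hp0 : 0 < p 0) by (unfold p; apply Rinv_0_lt_compat; auto).
    pose proof (low p y Cp dp ltac:(intros; apply ypos; lra)) as Hpl.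
    destruct (uni p (/ astar) Kp r1 Hp0 ltac:(apply Rinv_0_lt_compat; auto) ltac:(lra) Hpl Hp)
      as [mp [Hmp Hmp2]].
    exists Ky, (Kp / (mp * / astar)), (Kp / Rmin mp (/ astar)).
    split; [auto|split].
    - intros t Ht. replace (z t) with (/ p t) by (unfold p; apply Rinv_inv).
      pattern astar at 1. rewrite <- (Rinv_inv astar).
      assert (0 < / astar) by (apply Rinv_0_lt_compat; auto).
      eapply Rle_trans. apply (inv_lip (p t) (/ astar) mp); auto.
      replace (Kp / (mp * / astar) * exp(-r1*t)) with (Kp * exp(-r1*t) / (mp * / astar)) by (field; nra).
      apply Rmult_le_compat_r; [left; apply Rinv_0_lt_compat; nra| auto].
    - intros t Ht. rewrite xeq by auto.
      replace (z t) with (/ p t) by (unfold p; apply Rinv_inv).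
      assert (0 < / astar) by (apply Rinv_0_lt_compat; auto).
      assert (0 < Rmin mp (/ astar)) by (apply Rmin_pos; auto).
      assert (ln astar = - ln (/ astar)) by (rewrite ln_Rinv; auto; ring).
      rewrite H1, ln_Rinv by (specialize (Hmp2 t Ht); lra).
      replace (- ln (p t) - - ln (/ astar)) with (- (ln (p t) - ln (/ astar))) by ring.
      rewrite Rabs_Ropp.
      eapply Rle_trans. apply (ln_lip (p t) (/ astar) (Rmin mp (/ astar))); auto.
      eapply Rle_trans; [apply Rmin_l|]. auto. apply Rmin_r.
      replace (Kp / Rmin mp (/ astar) * exp(-r1*t)) with (Kp * exp(-r1*t) / Rmin mp (/ astar)) by (field; lra).
      apply Rmult_le_compat_r; [left; apply Rinv_0_lt_compat; lra| auto]. }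
  set (r0 := Rmin rho_a 1 / 2).
  assert (Hm : 0 < Rmin rho_a 1) by (apply Rmin_pos; lra).
  destruct (core r0 ltac:(unfold r0; lra)) as [Ky [Kz [Kx [H1 [H2 H3]]]]].
  split; [apply (lim_of y (/ astar) Ky r0); auto; unfold r0; lra|].
  split; [apply (lim_of z astar Kz r0); auto; unfold r0; lra|].
  split; auto.
  intros r Hr.
  set (r1 := Rmax r r0).
  assert (0 < r1 < Rmin rho_a 1).
  { unfold r1, r0. split. eapply Rlt_le_trans; [|apply Rmax_r]. lra.
    apply Rmax_lub_lt; lra. }
  destruct (core r1 H) as [_ [_ [K [_ [_ HK]]]]].
  exists K. intros t Ht. eapply Rle_trans. apply HK; auto.
  apply Rmult_le_compat_l. eapply Kpos; eauto.
  apply exp_mono. assert (r <= r1) by apply Rmax_l. nra.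
Qed.
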